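(* Let $r\ge 0$ be an integer and $\delta>0$. Every graph $G$ with $\tilde\nabla_{r/2}(G)\ge\delta$ contains a stable $i$-subdivision of density at least $\delta/(r+1)$ for some $i\in\{0,\dots,r\}$.
   Context: For a graph $H$, a subdivision of $H$ replaces edges of $H$ by internally vertex-disjoint paths; the vertices corresponding to $V(H)$ are called nails, the subgraph of $G$ realizing it is the model. For half-integer $s\ge0$, $H$ is an $s$-shallow topological minor of $G$ if $G$ contains as a subgraph a subdivision of $H$ in which every edge of $H$ is replaced by a path of length at most $2s+1$. Density of a graph is $|E|/|V|$, and $\tilde\nabla_s(G)$ is the maximum density of an $s$-shallow topological minor of $G$. $G$ contains $H$ as a stable $i$-subdivision if $G$ contains $H$ as an $\frac{i}{2}$-shallow topological minor with a model in which every path corresponding to an edge of $H$ has length exactly $i+1$ and is an induced path in $G$; the density of the stable subdivision is the density of $H$. *)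

(* Defs.v *)
From HB Require Import structures.
From mathcomp Require Import all_boot all_order all_algebra.
Set Implicit Arguments. Unset Strict Implicit. Unset Printing Implicit Defensive.
Import Order.TTheory GRing.Theory Num.Theory.

Record sgraph := SGraph {
  svert :> finType;
  sadj : rel svert;
  sadj_sym : symmetric sadj;
  sadj_irr : irreflexive sadj }.

Definition sedges (G : sgraph) : {set {set G}} :=
  [set [set p.1; p.2] | p in [set p : G * G | sadj p.1 p.2]].

Definition density (R : numFieldType) (G : sgraph) : R :=
  (#|sedges G|%:R / #|G|%:R)%R.

(* A model of a subdivision of H in G: nails [nail] (injective) and, for
   each edge uv of H, the sequence [P u v] of internal vertices of the
   path from nail u to nail v (with P v u the reverse of P u v). *)
Definition subdiv_model (H G : sgraph) (nail : H -> G) (P : H -> H -> seq G)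
  : Prop :=
  [/\ injective nail,
      forall u v, sadj u v ->
        path (@sadj G) (nail u) (rcons (P u v) (nail v)) /\
        uniq (nail u :: rcons (P u v) (nail v)),
      forall u v, sadj u v -> P v u = rev (P u v),
      forall u v w, sadj u v -> nail w \notin P u v
    & forall u v u' v' x, sadj u v -> sadj u' v' ->
        x \in P u v -> x \in P u' v' ->
        (u = u' /\ v = v') \/ (u = v' /\ v = u')].

(* H is an (r/2)-shallow topological minor of G: every path has length
   (= number of internal vertices + 1) at most 2(r/2)+1 = r+1. *)
Definition shallow_top_minor_half (r : nat) (H G : sgraph) : Prop :=
  exists nail P, @subdiv_model H G nail P /\
    forall u v, sadj u v -> size (P u v) <= r.

(* (x0 is an irrelevant default, indices are in range)
   the sequence q of vertices is an induced path of G: two vertices of q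
   are adjacent in G only if they are consecutive in q *)
Definition induced_seq (G : sgraph) (x0 : G) (q : seq G) : Prop :=
  forall j k, j < size q -> k < size q ->
    sadj (nth x0 q j) (nth x0 q k) ->
    j.+1 = k \/ k.+1 = j.

Definition stable_subdiv (i : nat) (H G : sgraph) : Prop :=
  exists nail P, @subdiv_model H G nail P /\
    forall u v, sadj u v ->
      size (P u v) = i /\
      @induced_seq G (nail u) (nail u :: rcons (P u v) (nail v)).

(* Main.v *)
Require Import Defs.
From HB Require Import structures.
From mathcomp Require Import all_boot all_order all_algebra.
Import Order.TTheory GRing.Theory Num.Theory.
From mathcomp Require Import zify.
Set Implicit Arguments. Unset Strict Implicit.

Fixpoint suff (G : sgraph) (x : G) (t : seq G) : seq G :=
  match t with
  | [::] => [::]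
  | z :: t' => let s := suff x t' in
      if s is _ :: _ then s else if sadj x z then t else [::]
  end.
Arguments suff {G}.

Lemma suff_drop (G : sgraph) (x : G) t : exists k, suff x t = drop k t.
Proof.
elim: t => [|z t [k IH]] /=; first by exists 0.
case E: (suff x t) => [|a b].
  case: (sadj x z); first by exists 0.
  by exists (size t).+1; rewrite /= drop_oversize.
by exists k.+1; rewrite /= -IH E.
Qed.

Lemma suff_nil (G : sgraph) (x : G) t : suff x t = [::] -> ~~ has (sadj x) t.
Proof.
elim: t => [|z t IH] //=.
case E: (suff x t) => [|a b] //.
by case: (sadj x z) => //= _; apply: IH.
Qed.

Lemma suff_head (G : sgraph) (x : G) t z t'' :
  suff x t = z :: t'' -> sadj x z /\ ~~ has (sadj x) t''.
Proof.
elim: t => [|w t IH] //=.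
case E: (suff x t) => [|a b].
  case A: (sadj x w) => //; case=> <- <-; split => //.
  exact: suff_nil.
by move=> H; apply: IH; rewrite E.
Qed.

Fixpoint gsc (G : sgraph) (n : nat) (x : G) (t : seq G) : seq G :=
  if n is n'.+1 then
    (if suff x t is z :: t'' then z :: gsc n' z t'' else [::])
  else [::].
Arguments gsc {G}.

Fixpoint indr (G : sgraph) (s : seq G) : Prop :=
  match s with
  | [::] => True
  | x :: s' => (forall y, y \in behead s' -> ~~ sadj x y) /\ indr s'
  end.
Arguments indr {G}.

Lemma gsc_props (G : sgraph) n (x : G) t : size t <= n -> path (@sadj G) x t ->
  [/\ subseq (gsc n x t) t, last x (gsc n x t) = last x t,
      path (@sadj G) x (gsc n x t) & indr (x :: gsc n x t)].
Proof.
elim: n x t => [|n IH] x t.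
  by case: t.
move=> Hs Hp /=.
case E: (suff x t) => [|z t''].
  move/suff_nil: E; case: t Hs Hp => [|a t] //= _ /andP[Ha _] /norP[]; by rewrite Ha.
have [k Ek] := suff_drop x t.
have [Hxz Hn] := suff_head E.
have Ht : t = take k t ++ z :: t'' by rewrite -E Ek cat_take_drop.
have Hs' : size t'' <= n.
  move: Hs; rewrite {1}Ht size_cat /=; lia.
have Hp' : path (@sadj G) z t''.
  by move: Hp; rewrite {1}Ht cat_path => /andP[_] /= /andP[].
have [S1 L1 P1 I1] := IH z t'' Hs' Hp'.
split.
- apply: (subseq_trans _ (drop_subseq t k)).
  by rewrite -Ek E /= eqxx.
- by rewrite /= L1 [in RHS]Ht last_cat.
- by rewrite /= Hxz.
- split => //= y /(mem_subseq S1) Hy.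
  by apply: contraNN Hn => Hxy; apply/hasP; exists y.
Qed.

Lemma indr_induced (G : sgraph) (x0 : G) s : indr s -> induced_seq x0 s.
Proof.
elim: s => [|x s IH] /=; first by move=> _ j k.
move=> [Hb Hi] [|j] [|k] /= hj hk hadj.
- by rewrite sadj_irr in hadj.
- case: k hk hadj => [|k] hk hadj; first by left.
  case: s hj hk hadj Hb {IH Hi} => [|a s] //= _ hk hadj Hb.
  have : nth x0 s k \in s by apply: mem_nth; rewrite -2!ltnS.
  by move/Hb; rewrite hadj.
- case: j hj hadj => [|j] hj hadj; first by right.
  case: s hj hk hadj Hb {IH Hi} => [|a s] //= hj _ hadj Hb.
  have : nth x0 s j \in s by apply: mem_nth; rewrite -2!ltnS.
  by move/Hb; rewrite sadj_sym hadj.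
- have := IH Hi j k hj hk hadj; lia.
Qed.

Lemma induced_rev (G : sgraph) (x0 y0 : G) s :
  induced_seq x0 s -> induced_seq y0 (rev s).
Proof.
move=> H j k; rewrite size_rev => hj hk.
rewrite !nth_rev // (set_nth_default x0); last lia.
rewrite (set_nth_default x0 y0 (n := size s - k.+1)); last lia.
move/H; move=> /(_ ltac:(lia) ltac:(lia)); lia.
Qed.

Lemma rev_cons_rcons (T : Type) (x y : T) s :
  rev (y :: rcons s x) = x :: rcons (rev s) y.
Proof. by rewrite rev_cons rev_rcons. Qed.

Lemma path_rev (G : sgraph) (x y : G) s :
  path (@sadj G) y (rcons s x) -> path (@sadj G) x (rcons (rev s) y).
Proof.
move=> H.
have := rev_path (@sadj G) y (rcons s x).
rewrite last_rcons belast_rcons rev_cons => ->.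
by rewrite (@eq_path _ _ (@sadj G)) // => a b; rewrite sadj_sym.
Qed.

Definition Qf (H G : sgraph) (nail : H -> G) (P : H -> H -> seq G) u v : seq G :=
  behead (belast (nail u) (gsc (size (rcons (P u v) (nail v))) (nail u)
                                (rcons (P u v) (nail v)))).

Definition props (H G : sgraph) (nail : H -> G) (P : H -> H -> seq G) u v (Q : seq G) :=
  [/\ path (@sadj G) (nail u) (rcons Q (nail v)), uniq (nail u :: rcons Q (nail v)),
      induced_seq (nail u) (nail u :: rcons Q (nail v)), {subset Q <= P u v}
    & size Q <= size (P u v)].

Lemma Qf_props (H G : sgraph) (nail : H -> G) P u v :
  subdiv_model nail P -> sadj u v -> props nail P u v (Qf nail P u v).
Proof.
case=> inj Hpath Hrev Hnail Hdisj Huv.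
have [Hp Hu] := Hpath u v Huv.
rewrite /props /Qf.
set t := rcons (P u v) (nail v).
have [S L Pa I] := gsc_props (leqnn (size t)) Hp.
set g := gsc _ _ _ in S L Pa I *.
have Hg : g = rcons (behead (belast (nail u) g)) (nail v).
  case: g L {S Pa I} => [|y s] /=.
    rewrite /t last_rcons => /inj E; by rewrite E sadj_irr in Huv.
  by rewrite /t last_rcons => <-; rewrite -lastI.
rewrite -Hg.
have Hsub : subseq (nail u :: g) (nail u :: t) by rewrite /= eqxx.
have Hun : uniq (nail u :: g) := subseq_uniq Hsub Hu.
split => //.
- exact: indr_induced.
- move=> x Hx.
  have Hx' : x \in g by rewrite Hg mem_rcons in_cons Hx orbT.
  move: (mem_subseq S Hx'); rewrite /t mem_rcons in_cons => /orP[/eqP E|//].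
  move: Hun; rewrite /= Hg rcons_uniq => /andP[_ /andP[+ _]].
  by rewrite -E Hx.
- by move: (size_subseq S); rewrite {1}Hg /t !size_rcons.
Qed.

Definition Pf (H G : sgraph) (nail : H -> G) (P : H -> H -> seq G) u v : seq G :=
  if (enum_rank u < enum_rank v)%N then Qf nail P u v else rev (Qf nail P v u).

Lemma Pf_props (H G : sgraph) (nail : H -> G) P u v :
  subdiv_model nail P -> sadj u v -> props nail P u v (Pf nail P u v).
Proof.
move=> M Huv; rewrite /Pf; case: ifP => _; first exact: Qf_props.
have Hvu : sadj v u by rewrite sadj_sym.
have [Pa Un In Su Si] := Qf_props M Hvu.
have Hr := (let: And5 _ _ Hrev _ _ := M in Hrev) u v Huv.
split.
- exact: path_rev.
- by rewrite -rev_cons_rcons rev_uniq.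
- rewrite -rev_cons_rcons; exact: induced_rev In.
- by move=> x; rewrite mem_rev => /Su; rewrite Hr mem_rev.
- by rewrite size_rev -(size_rev (P u v)) -Hr.
Qed.

Lemma Pf_sym (H G : sgraph) (nail : H -> G) P u v :
  sadj u v -> Pf nail P v u = rev (Pf nail P u v).
Proof.
move=> Huv; rewrite /Pf.
have Hne : enum_rank u != enum_rank v.
  apply: contraTneq Huv => /enum_rank_inj ->; by rewrite sadj_irr.
case: ltngtP; rewrite ?revK //.
by move=> E; move: Hne; rewrite -(inj_eq val_inj) /= E eqxx.
Qed.

Definition adji (H G : sgraph) (nail : H -> G) P (i : nat) : rel H :=
  fun u v => sadj u v && (size (Pf nail P u v) == i).

Lemma adji_sym (H G : sgraph) (nail : H -> G) P i : symmetric (adji nail P i).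
Proof.
move=> u v; rewrite /adji sadj_sym.
case E: (sadj v u) => //=.
by rewrite (Pf_sym _ _ E) size_rev.
Qed.

Lemma adji_irr (H G : sgraph) (nail : H -> G) P i : irreflexive (adji nail P i).
Proof. by move=> u; rewrite /adji sadj_irr. Qed.

Definition Hsub (H G : sgraph) (nail : H -> G) P i : sgraph :=
  @SGraph H (adji nail P i) (adji_sym nail P i) (adji_irr nail P i).

Lemma Hsub_stable (H G : sgraph) (nail : H -> G) P i :
  subdiv_model nail P -> stable_subdiv i (Hsub nail P i) G.
Proof.
move=> M; exists nail, (Pf nail P); split.
  have M' := M; case: M' => inj Hpath Hrev Hnail Hdisj.
  split => //.
  - move=> u v /andP[Huv _]; by have [] := Pf_props M Huv.
  - by move=> u v /andP[Huv _]; rewrite (Pf_sym _ _ Huv).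
  - move=> u v w /andP[Huv _]; have [_ _ _ Su _] := Pf_props M Huv.
    by apply: contra (Hnail u v w Huv); apply: Su.
  - move=> u v u' v' x /andP[Huv _] /andP[Huv' _] Hx Hx'.
    have [_ _ _ Su _] := Pf_props M Huv.
    have [_ _ _ Su' _] := Pf_props M Huv'.
    exact: Hdisj Huv Huv' (Su _ Hx) (Su' _ Hx').
move=> u v /andP[Huv /eqP Hs]; split => //.
by have [] := Pf_props M Huv.
Qed.

Lemma card_bigcup_leq (T : finType) n (A : 'I_n -> {set T}) :
  #|\bigcup_(i < n) A i| <= \sum_(i < n) #|A i|.
Proof.
apply: (big_ind2 (fun (X : {set T}) m => #|X| <= m)) => //.
- by rewrite cards0.
- move=> X m Y k h1 h2; apply: leq_trans (leq_card_setU X Y).1 _.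
  exact: leq_add.
Qed.

Unset Implicit Arguments. Set Strict Implicit.

Theorem mainTheorem8 (R : realFieldType) (r : nat) (delta : R)
  (G : sgraph) :
  (0 < delta)%R ->
  (exists H : sgraph, shallow_top_minor_half r H G /\ (delta <= density R H)%R) ->
  exists i : nat, i <= r /\
    exists H : sgraph, stable_subdiv i H G /\
      (delta / (r.+1)%:R <= density R H)%R.
Proof.
move=> Hd [H [[nail [P [M Hsz]]] Hden]].
pose a (i : 'I_r.+1) := #|sedges (Hsub nail P i)|.
have Hsub1 : sedges H \subset \bigcup_(i < r.+1) (sedges (Hsub nail P i) : {set {set H}}).
  apply/subsetP => e /imsetP [p]; rewrite inE => Hp ->.
  have [_ _ _ _ Si] := Pf_props M Hp.
  have Hlt : size (Pf nail P p.1 p.2) < r.+1 := leq_trans Si (Hsz _ _ Hp).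
  apply/bigcupP; exists (Ordinal Hlt) => //.
  apply/imsetP; exists p => //; rewrite inE /= /adji Hp eqxx.
  done.
have HE : #|sedges H| <= \sum_(i < r.+1) a i.
  apply: leq_trans (subset_leq_card Hsub1) _; exact: card_bigcup_leq.
case: (arg_maxnP a (i0 := ord0) (P := predT) erefl) => i0 _ Hmax.
have HE2 : #|sedges H| <= r.+1 * a i0.
  apply: leq_trans HE _.
  have : \sum_(i < r.+1) a i <= \sum_(i < r.+1) a i0 by apply: leq_sum => i _; apply: Hmax.
  by rewrite sum_nat_const card_ord.
exists i0; split; first by rewrite -ltnS.
exists (Hsub nail P i0); split; first exact: Hsub_stable.
rewrite /density.
have Hr : (0 < (r.+1)%:R :> R)%R by rewrite ltr0n.
have HV : (0 <= (#|H|%:R : R)^-1)%R by rewrite invr_ge0 ler0n.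
apply: le_trans (_ : (#|sedges H|%:R / #|H|%:R / (r.+1)%:R <= _)%R).
  by apply: ler_wpM2r => //; rewrite invr_ge0 ler0n.
rewrite mulrAC; apply: ler_wpM2r => //.
rewrite ler_pdivrMr // mulrC -natrM ler_nat.
exact: HE2.
Qed.
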